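(* For each $n=1,2,\dots$ there is a function $f:\{-1,1\}^n\to \mathbb{R}$ with \[ \|f\|_2=1\le \|f\|_\infty\le\sqrt2,\qquad I(f)<1, \qquad \text{and}\qquad H(\hat f^2)>\frac{n}{n+1}\log n. \]
   Context: Equip $\{-1,1\}^n$ with the uniform (normalized counting) probability measure. For $g:\{-1,1\}^n\to\mathbb{C}$, $\|g\|_2^2=2^{-n}\sum_{\delta\in\{-1,1\}^n}|g(\delta)|^2$ and $\|g\|_\infty=\max_{\delta}|g(\delta)|$. Let $\varepsilon_i:\{-1,1\}^n\to\{-1,1\}$ be the $i$-th coordinate projection, and for $A\subseteq[n]=\{1,\dots,n\}$ let $W_A=\prod_{i\in A}\varepsilon_i$. The Fourier–Walsh coefficients are $\hat g(A)=2^{-n}\sum_{\delta\in\{-1,1\}^n} g(\delta)W_A(\delta)$, so $g=\sum_{A\subseteq[n]}\hat g(A)W_A$. The influence is $I(g)=\sum_{A\subseteq[n]}|\hat g(A)|^2|A|$, and the Fourier entropy is $H(|\hat g|^2)=-\sum_{A\subseteq[n]}|\hat g(A)|^2\log|\hat g(A)|^2$ with $0\log 0=0$ (for real $g$ this is written $H(\hat g^2)$). Logarithms are to base $2$. *)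

(* Defs.v *)
From HB Require Import structures.
From mathcomp Require Import all_boot all_order all_algebra.
From mathcomp Require Import all_classical all_reals all_analysis.
Set Implicit Arguments. Unset Strict Implicit. Unset Printing Implicit Defensive.
Import Order.TTheory GRing.Theory Num.Theory.
Local Open Scope ring_scope.

Section Cube.
Variable R : realType.
Variable n : nat.

(* A point delta of {-1,1}^n is encoded as d : {ffun 'I_n -> bool};
   coordinate i equals -1 if d i = true and 1 if d i = false. *)
Definition cube := {ffun 'I_n -> bool}.

Definition eps (i : 'I_n) (d : cube) : R := if d i then -1 else 1.

Definition walsh (A : {set 'I_n}) (d : cube) : R := \prod_(i in A) eps i d.

Definition expect (g : cube -> R) : R := (2 ^+ n)^-1 * \sum_(d : cube) g d.

Definition norm2 (g : cube -> R) : R := Num.sqrt (expect (fun d => g d ^+ 2)).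

Definition norminf (g : cube -> R) : R := \big[Num.max/0]_(d : cube) `|g d|.

Definition fourier (g : cube -> R) (A : {set 'I_n}) : R :=
  expect (fun d => g d * walsh A d).

Definition influence (g : cube -> R) : R :=
  \sum_(A : {set 'I_n}) fourier g A ^+ 2 * (#|A|%:R).

Definition log2 (x : R) : R := ln x / ln 2.

Definition xlogx (x : R) : R := if x == 0 then 0 else x * log2 x.

Definition fourier_entropy (g : cube -> R) : R :=
  - \sum_(A : {set 'I_n}) xlogx (fourier g A ^+ 2).

End Cube.

(* Main.v *)
Require Import Defs.
From HB Require Import structures.
From mathcomp Require Import all_boot all_order all_algebra.
From mathcomp Require Import all_classical all_reals all_analysis.
From mathcomp Require Import complex.
From mathcomp Require Import ring lra.
Import Order.TTheory GRing.Theory Num.Theory.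
Local Open Scope ring_scope.
Set Implicit Arguments. Unset Strict Implicit. Unset Printing Implicit Defensive.
Section Walsh.
Variable R : realType.
Variable n : nat.

Definition flip (i : 'I_n) (d : cube n) : cube n :=
  [ffun j => if j == i then ~~ d j else d j].

Lemma flipK i : involutive (flip i).
Proof. by move=> d; apply/ffunP => j; rewrite !ffunE; case: (j == i) => //; rewrite negbK. Qed.

Lemma eps_flip i j d : eps R j (flip i d) = if j == i then - eps R j d else eps R j d.
Proof. rewrite /eps ffunE; case: eqP => [->|//]; by case: (d i); rewrite ?opprK. Qed.

Lemma walsh_flip (A : {set 'I_n}) i d :
  walsh R A (flip i d) = if i \in A then - walsh R A d else walsh R A d.
Proof.
rewrite /walsh; case: ifP => iA.
  rewrite (bigD1 i) //= [in RHS](bigD1 i) //= eps_flip eqxx mulNr; congr (- (_ * _)).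
  by apply: eq_bigr => j /andP[_ /negbTE ji]; rewrite eps_flip ji.
apply: eq_bigr => j jA; rewrite eps_flip; case: eqP => // eji.
by rewrite eji iA in jA.
Qed.

Lemma walsh_sq (A : {set 'I_n}) (d : cube n) : walsh R A d * walsh R A d = 1.
Proof.
rewrite /walsh -big_split /=; apply: big1 => i _.
by rewrite /eps; case: (d i); rewrite ?mulrNN mulr1.
Qed.

Lemma card_cube : #|{: cube n}| = (2 ^ n)%N.
Proof. by rewrite card_ffun card_bool card_ord. Qed.

Lemma orth (A B : {set 'I_n}) :
  expect (fun d => walsh R A d * walsh R B d) = (A == B)%:R.
Proof.
rewrite /expect; case: eqP => [<-|/eqP nAB].
  under eq_bigr do rewrite walsh_sq.
  rewrite sumr_const card_cube -natrX mulVf //.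
have [i Hi] : exists i, (i \in A) != (i \in B).
  apply/existsP; apply: contraR nAB => /existsPn H; apply/eqP/setP => i.
  by have := H i; rewrite negbK => /eqP.
set S := \sum_d _.
suff -> : S = 0 by rewrite mulr0.
have : S = - S.
  rewrite {1}/S (reindex_inj (can_inj (flipK i))) /S /= -sumrN; apply: eq_bigr => d _.
  rewrite !walsh_flip; move: Hi; case: (i \in A); case: (i \in B) => //= _.
    by rewrite mulNr.
  by rewrite mulrN.
move=> h; lra.
Qed.

End Walsh.
Section Constr.
Variable R : realType.
Variable n : nat.
Local Notation C := (R[i]).
Local Notation ReC := (@complex.Re R).
Local Notation ImC := (@complex.Im R).
Local Open Scope complex_scope.

Lemma ii : 'i * 'i = -1 :> C.
Proof. apply/eqP; rewrite eq_complex /= !mulr0 !mul0r mulr1 add0r addr0 oppr0 !eqxx //. Qed.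

Definition pp : R := (n%:R + 1)^-1.
Definition qq : R := n%:R / (n%:R + 1).
Definition ss : R := Num.sqrt pp.
Definition cc : R := Num.sqrt qq.

Lemma n1_gt0 : 0 < n%:R + 1 :> R.
Proof. by rewrite ltr_wpDl. Qed.

Lemma pp_gt0 : 0 < pp.
Proof. by rewrite /pp invr_gt0 n1_gt0. Qed.
Lemma qq_ge0 : 0 <= qq.
Proof. by rewrite /qq divr_ge0 // ltW // n1_gt0. Qed.
Lemma pq1 : pp + qq = 1.
Proof. rewrite /pp /qq; have h := n1_gt0; field; by rewrite gt_eqF. Qed.
Lemma ss2 : ss ^+ 2 = pp.
Proof. by rewrite /ss sqr_sqrtr // ltW // pp_gt0. Qed.
Lemma cc2 : cc ^+ 2 = qq.
Proof. by rewrite /cc sqr_sqrtr // qq_ge0. Qed.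

Definition zf (A : {set 'I_n}) (i : 'I_n) : C := if i \in A then 'i * ss%:C else cc%:C.
Definition coef (A : {set 'I_n}) : R := ReC ((1 + 'i) * \prod_i zf A i).
Definition wt (A : {set 'I_n}) : R := \prod_i (if i \in A then pp else qq).

Lemma coef_sq A : coef A ^+ 2 = wt A.
Proof.
have [r [h e]] : exists r : R, (\prod_i zf A i = r%:C \/ \prod_i zf A i = 'i * r%:C)
    /\ r ^+ 2 = wt A.
  rewrite /wt; apply: (big_ind2 (fun z t => exists r : R, (z = r%:C \/ z = 'i * r%:C) /\ r ^+ 2 = t)).
  - by exists 1; split; [left | rewrite expr1n].
  - move=> z1 t1 z2 t2 [r1 [h1 <-]] [r2 [h2 <-]].
    case: h1 => ->; case: h2 => ->.
    + by exists (r1 * r2); split; [left; rewrite rmorphM | rewrite exprMn].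
    + by exists (r1 * r2); split; [right; rewrite rmorphM; ring | rewrite exprMn].
    + by exists (r1 * r2); split; [right; rewrite rmorphM; ring | rewrite exprMn].
    + exists (- (r1 * r2)); split; last by rewrite sqrrN exprMn.
      left; rewrite rmorphN rmorphM.
      have -> : 'i * r1%:C * ('i * r2%:C) = ('i * 'i) * (r1%:C * r2%:C) :> C by ring.
      by rewrite ii mulN1r.
  - move=> i _; rewrite /zf; case: ifP => _.
      by exists ss; split; [right | rewrite ss2].
    by exists cc; split; [left | rewrite cc2].
have h1i : (1 + 'i : C) = 1 +i* 1.
  by apply/eqP; rewrite eq_complex /= addr0 add0r !eqxx.
rewrite /coef h1i; case: h => ->.
  by rewrite /= mulr0 subr0 mul1r.
rewrite /= !mulr0 !mul0r !mul1r subr0 add0r sqrrN.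
by rewrite add0r.
Qed.

End Constr.
Section Constr2.
Variable R : realType.
Variable n : nat.
Local Notation C := (R[i]).
Local Notation ReC := (@complex.Re R).
Local Notation ImC := (@complex.Im R).
Local Open Scope complex_scope.

Lemma ReD (x y : C) : ReC (x + y) = ReC x + ReC y.
Proof. by case: x; case: y. Qed.
Lemma Re_sum (I : finType) (f : I -> C) : ReC (\sum_i f i) = \sum_i ReC (f i).
Proof. by apply: (big_morph _ ReD). Qed.
Lemma Re_mulr (z : C) (r : R) : ReC (z * r%:C) = ReC z * r.
Proof. by case: z => a b; rewrite /= mulr0 subr0. Qed.

Definition Fn (d : cube n) : R := \sum_A @coef R n A * walsh R A d.

Definition Pd (d : cube n) : C := \prod_i (('i * (@ss R n)%:C) * (eps R i d)%:C + (@cc R n)%:C).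

Lemma F_expand d : Fn d = ReC ((1 + 'i) * Pd d).
Proof.
rewrite /Pd bigA_distr mulr_sumr Re_sum /Fn; apply: eq_bigr => J _.
rewrite /coef -Re_mulr -mulrA; congr (ReC (_ * _)).
have -> : \prod_i (if i \in J then 'i * (@ss R n)%:C * (eps R i d)%:C else (@cc R n)%:C)
    = \prod_i (@zf R n J i * (if i \in J then (eps R i d)%:C else 1)).
  by apply: eq_bigr => i _; rewrite /zf; case: ifP; rewrite ?mulr1.
by rewrite big_split /= -big_mkcond /walsh rmorph_prod.
Qed.

Lemma Pd_norm d : ReC (Pd d) ^+ 2 + ImC (Pd d) ^+ 2 = 1.
Proof.
rewrite /Pd; apply: (big_ind (fun z : C => ReC z ^+ 2 + ImC z ^+ 2 = 1)).
- by rewrite /= expr1n expr0n addr0.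
- move=> [a b] [c d'] /= h1 h2.
  have -> : (a * c - b * d') ^+ 2 + (a * d' + b * c) ^+ 2
      = (a ^+ 2 + b ^+ 2) * (c ^+ 2 + d' ^+ 2) by ring.
  by rewrite h1 h2 mulr1.
- move=> i _ /=.
  have he : eps R i d ^+ 2 = 1 by rewrite /eps; case: (d i); rewrite ?sqrrN expr1n.
  set e := eps R i d.
  have -> : (0 * @ss R n - 1 * 0) * e - (0 * 0 + 1 * @ss R n) * 0 + @cc R n = @cc R n by ring.
  have -> : (0 * @ss R n - 1 * 0) * 0 + (0 * 0 + 1 * @ss R n) * e + 0 = @ss R n * e by ring.
  by rewrite exprMn he mulr1 (@cc2 R n) (@ss2 R n) addrC (@pq1 R n).
Qed.

Lemma F_bound d : `|Fn d| <= Num.sqrt 2.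
Proof.
rewrite F_expand; have := Pd_norm d; case: (Pd d) => u v /= h.
have -> : (1 + 0) * u - (0 + 1) * v = u - v by ring.
rewrite -sqrtr_sqr ler_sqrt //.
have h2 : (u - v) ^+ 2 = 2 * (u ^+ 2 + v ^+ 2) - (u + v) ^+ 2 by ring.
rewrite h2 h; have := sqr_ge0 (u + v); lra.
Qed.

End Constr2.
Section Main.
Variable R : realType.
Variable n : nat.
Local Notation coefR := (@coef R n).
Local Notation wtR := (@wt R n).
Local Notation FnR := (@Fn R n).
Local Notation ppR := (@pp R n).
Local Notation qqR := (@qq R n).

Lemma expect_lin (al : {set 'I_n} -> R) (g : cube n -> R) :
  expect (fun d => (\sum_A al A * walsh R A d) * g d)
  = \sum_A al A * expect (fun d => walsh R A d * g d).
Proof.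
rewrite /expect.
under [RHS]eq_bigr => A _ do rewrite mulrCA.
rewrite -mulr_sumr; congr (_ * _).
under eq_bigr => d _ do rewrite mulr_suml.
rewrite exchange_big /=; apply: eq_bigr => A _; rewrite mulr_sumr.
by apply: eq_bigr => d _; rewrite mulrA.
Qed.

Lemma fourier_F B : fourier FnR B = coefR B.
Proof.
rewrite /fourier /Fn expect_lin.
under eq_bigr do rewrite orth.
rewrite (bigD1 B) //= eqxx mulr1 big1 ?addr0 // => A /negbTE ->.
by rewrite mulr0.
Qed.

Lemma wsum (F G : 'I_n -> R) :
  \sum_(J : {set 'I_n}) \prod_i (if i \in J then F i else G i) = \prod_i (F i + G i).
Proof. by rewrite bigA_distr. Qed.

Lemma wt_sum1 : \sum_A wtR A = 1.
Proof.
rewrite /wt wsum; apply: big1 => i _; exact: pq1.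
Qed.

Lemma wt_cond i0 (x y : R) :
  \sum_A wtR A * (if i0 \in A then x else y) = ppR * x + qqR * y.
Proof.
pose F i := if i == i0 then ppR * x else ppR.
pose G i := if i == i0 then qqR * y else qqR.
transitivity (\sum_(J : {set 'I_n}) \prod_i (if i \in J then F i else G i)).
  apply: eq_bigr => A _; rewrite /wt (bigD1 i0) //= [in RHS](bigD1 i0) //=.
  rewrite /F /G eqxx.
  have -> : \prod_(i | i != i0) (if i \in A then ppR else qqR)
      = \prod_(i | i != i0) (if i \in A then F i else G i).
    by apply: eq_bigr => i /negbTE h; rewrite /F /G h.
  by case: (i0 \in A); rewrite mulrAC.
rewrite wsum (bigD1 i0) //= big1 ?mulr1 /F /G ?eqxx //.
by move=> i /negbTE h; rewrite h pq1.
Qed.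

Lemma card_sum (A : {set 'I_n}) : (#|A|%:R : R) = \sum_i (if i \in A then 1 else 0).
Proof. by rewrite -big_mkcond sumr_const. Qed.

Lemma influence_F : influence FnR = n%:R * ppR.
Proof.
rewrite /influence.
under eq_bigr => A _ do rewrite fourier_F coef_sq card_sum mulr_sumr.
rewrite exchange_big /=.
under eq_bigr => i _ do rewrite wt_cond mulr1 mulr0 addr0.
by rewrite sumr_const card_ord mulr_natl.
Qed.

End Main.
Section Main2.
Variable R : realType.
Variable n : nat.
Local Notation coefR := (@coef R n).
Local Notation wtR := (@wt R n).
Local Notation FnR := (@Fn R n).
Local Notation ppR := (@pp R n).
Local Notation qqR := (@qq R n).

Lemma expect_WF A : expect (fun d => walsh R A d * FnR d) = coefR A.
Proof.
rewrite -fourier_F /fourier; congr expect; apply: boolp.funext => d.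
by rewrite mulrC.
Qed.

Lemma expect_F2 : expect (fun d => FnR d ^+ 2) = 1.
Proof.
have -> : (fun d => FnR d ^+ 2) = (fun d => (\sum_A coefR A * walsh R A d) * FnR d).
  by apply: boolp.funext => d; rewrite expr2.
rewrite expect_lin.
under eq_bigr => A _ do rewrite expect_WF -expr2 coef_sq.
exact: wt_sum1.
Qed.

Lemma norm2_F : norm2 FnR = 1.
Proof. by rewrite /norm2 expect_F2 sqrtr1. Qed.

Lemma norminf_le : norminf FnR <= Num.sqrt 2.
Proof.
rewrite /norminf; apply: (big_ind (fun x => x <= Num.sqrt 2)).
- exact: sqrtr_ge0.
- by move=> x y hx hy; rewrite ge_max hx hy.
- by move=> d _; exact: F_bound.
Qed.

Lemma norminf_ge d : `|FnR d| <= norminf FnR.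
Proof. by rewrite /norminf (bigD1 d) //= le_max lexx. Qed.

Lemma norminf_ge1 : 1 <= norminf FnR.
Proof.
set M := norminf FnR.
have M0 : 0 <= M by apply: le_trans (norminf_ge [ffun=> false]).
have hb : forall d, FnR d ^+ 2 <= M ^+ 2.
  move=> d; rewrite -real_normK ?num_real //.
  by rewrite ler_pXn2r // ?nnegrE ?normr_ge0 // norminf_ge.
have : 1 <= M ^+ 2.
  rewrite -expect_F2 /expect.
  apply: le_trans (_ : (2 ^+ n)^-1 * \sum_(d : cube n) M ^+ 2 <= _).
    by rewrite ler_wpM2l ?invr_ge0 ?exprn_ge0 // ler_sum.
  rewrite sumr_const card_cube -[M ^+ 2 *+ _]mulr_natr natrX mulrCA mulVf ?mulr1 //.

move=> h; nra.
Qed.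

End Main2.
Section Main3.
Variable R : realType.
Variable n : nat.
Hypothesis hn : (0 < n)%N.
Local Notation coefR := (@coef R n).
Local Notation wtR := (@wt R n).
Local Notation FnR := (@Fn R n).
Local Notation ppR := (@pp R n).
Local Notation qqR := (@qq R n).

Lemma N_gt0 : 0 < n%:R :> R.
Proof. by rewrite ltr0n. Qed.

Lemma qq_gt0 : 0 < qqR.
Proof. by rewrite /qq divr_gt0 ?N_gt0 ?n1_gt0. Qed.

Lemma wt_ln A : 0 < wtR A /\ ln (wtR A) = \sum_i (if i \in A then ln ppR else ln qqR).
Proof.
rewrite /wt; apply: (big_ind2 (fun x y => 0 < x /\ ln x = y)).
- by rewrite ln1.
- move=> x1 y1 x2 y2 [h1 e1] [h2 e2]; split; first exact: mulr_gt0.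
  by rewrite lnM ?posrE // e1 e2.
- move=> i _; case: ifP => _; split => //; [exact: pp_gt0 | exact: qq_gt0].
Qed.

Lemma entropy_F : fourier_entropy FnR
  = - (n%:R * (ppR * (ln ppR / ln 2) + qqR * (ln qqR / ln 2))).
Proof.
rewrite /fourier_entropy; congr (- _).
have -> : \sum_A xlogx (fourier FnR A ^+ 2)
    = \sum_A wtR A * \sum_i (if i \in A then ln ppR / ln 2 else ln qqR / ln 2).
  apply: eq_bigr => A _; rewrite fourier_F coef_sq /xlogx.
  have [h e] := wt_ln A.
  rewrite gt_eqF // /log2 e mulr_suml; congr (_ * _).
  by apply: eq_bigr => i _; case: ifP.
under eq_bigr => A _ do rewrite mulr_sumr.
rewrite exchange_big /=.
under eq_bigr => i _ do rewrite wt_cond.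
by rewrite sumr_const card_ord mulr_natl.
Qed.

Lemma ent_ineq : n%:R / (n%:R + 1) * log2 (n%:R : R)
  < - (n%:R * (ppR * (ln ppR / ln 2) + qqR * (ln qqR / ln 2))).
Proof.
have N0 := N_gt0; have N10 := @n1_gt0 R n.
set N : R := n%:R in N0 N10 *.
have l2 : 0 < ln (2 : R) by rewrite ln_gt0 // ltr1n.
have hp : ln ppR = - ln (N + 1) by rewrite /pp lnV ?posrE.
have hq : ln qqR = ln N - ln (N + 1) by rewrite /qq ln_div ?posrE.
have hl : ln N < ln (N + 1) by rewrite ltr_ln ?posrE // ltrDl.
rewrite hp hq /pp /qq /log2 -subr_gt0.
have -> : - (N * ((N + 1)^-1 * (- ln (N + 1) / ln 2) + N / (N + 1) * ((ln N - ln (N + 1)) / ln 2)))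
   - N / (N + 1) * (ln N / ln 2) = N * (ln (N + 1) - ln N) / ln 2.
  field; rewrite ?gt_eqF //.
by rewrite divr_gt0 // mulr_gt0 // subr_gt0.
Qed.

End Main3.

Unset Implicit Arguments.
Set Strict Implicit.

Theorem theorem1 (R : realType) (n : nat) (hn : (1 <= n)%N) :
  exists f : cube n -> R,
    [/\ norm2 f = 1,
        1 <= norminf f,
        norminf f <= Num.sqrt 2,
        influence f < 1
      & fourier_entropy f > n%:R / (n%:R + 1) * log2 (n%:R : R)].
Proof.
exists (@Fn R n); split.
- exact: norm2_F.
- exact: norminf_ge1.
- exact: norminf_le.
- rewrite influence_F /pp ltr_pdivrMr ?n1_gt0 // mul1r ltrDl //.
- by rewrite entropy_F //; exact: ent_ineq.
Qed.
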